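(* Let $G$ be a group, $n\ge1$, $\phi_1,\dots,\phi_n\in\operatorname{End}(G)$ and $\sigma\in S_n$. Let $\phi$ be the endomorphism of $G^n$ given by $\phi(g_1,\dots,g_n)=(\phi_1(g_{\sigma(1)}),\dots,\phi_n(g_{\sigma(n)}))$. Write the disjoint cycle decomposition of $\sigma$, including cycles of length one, as $\sigma=(c_1\,\dots\,c_{n_1})(c_{n_1+1}\,\dots\,c_{n_2})\cdots(c_{n_{k-1}+1}\,\dots\,c_{n_k})$ with $0=n_0<n_1<\dots<n_k=n$, where the cycle $(a_1\,a_2\,\dots\,a_m)$ means $a_1\mapsto a_2\mapsto\cdots\mapsto a_m\mapsto a_1$. Put $\tilde\phi_j=\phi_{c_{n_{j-1}+1}}\circ\phi_{c_{n_{j-1}+2}}\circ\cdots\circ\phi_{c_{n_j}}$. Then $R(\phi)=\prod_{j=1}^kR(\tilde\phi_j)$.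
   Context: For an endomorphism $\psi$ of a group $A$, $x,y\in A$ are $\psi$-conjugate if $x=gy\psi(g)^{-1}$ for some $g\in A$; $R(\psi)\in\mathbb{N}\cup\{\infty\}$ is the number of $\psi$-conjugacy classes, with the convention $a\cdot\infty=\infty$. *)

(* Defs.v *)
From Stdlib Require Import ClassicalDescription ClassicalEpsilon.
From HB Require Import structures.
From mathcomp Require Import all_boot fingroup perm.

Set Implicit Arguments.
Unset Strict Implicit.
Unset Printing Implicit Defensive.

Local Open Scope group_scope.

Definition tconj (G : groupType) (psi : G -> G) (x y : G) : Prop :=
  exists g : G, x = g * y * (psi g)^-1.

Definition has_Rnum (G : groupType) (psi : G -> G) (n : nat) : Prop :=
  exists f : 'I_n -> G,
    (forall x : G, exists i, tconj psi x (f i)) /\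
    (forall i j, tconj psi (f i) (f j) -> i = j).

(* Reidemeister number R(psi) in N u {oo}; None stands for oo. *)
Definition Rnum (G : groupType) (psi : G -> G) : option nat :=
  match excluded_middle_informative (exists n, has_Rnum psi n) with
  | left H => Some (proj1_sig (constructive_indefinite_description _ H))
  | right _ => None
  end.

Definition emul (a b : option nat) : option nat :=
  match a, b with
  | Some x, Some y => Some (x * y)%N
  | _, _ => None
  end.

Definition prodG (n : nat) (G : groupType) := {ffun 'I_n -> G}.

Section ProdGroup.
Variables (n : nat) (G : groupType).

HB.instance Definition _ := Choice.on (prodG n G).

Definition pmul (x y : prodG n G) : prodG n G := [ffun i => x i * y i].
Definition pinv (x : prodG n G) : prodG n G := [ffun i => (x i)^-1].
Definition pone : prodG n G := [ffun => 1].

Fact pmulA : associative pmul.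
Proof. by move=> x y z; apply/ffunP=> i; rewrite !ffunE mulgA. Qed.
Fact pmul1 : left_id pone pmul.
Proof. by move=> x; apply/ffunP=> i; rewrite !ffunE mul1g. Qed.
Fact pmul1r : right_id pone pmul.
Proof. by move=> x; apply/ffunP=> i; rewrite !ffunE mulg1. Qed.
Fact pmulV : left_inverse pone pinv pmul.
Proof. by move=> x; apply/ffunP=> i; rewrite !ffunE mulVg. Qed.
Fact pmulVr : right_inverse pone pinv pmul.
Proof. by move=> x; apply/ffunP=> i; rewrite !ffunE mulgV. Qed.

HB.instance Definition _ :=
  isGroup.Build (prodG n G) pmulA pmul1 pmul1r pmulV pmulVr.

End ProdGroup.

Definition phiN (G : groupType) (n : nat) (phi : 'I_n -> G -> G)
    (sigma : {perm 'I_n}) (g : prodG n G) : prodG n G :=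
  [ffun i => phi i (g (sigma i))].

(* For the cycle of sigma starting at r, i.e. (r  sigma r  ...  sigma^(m-1) r),
   the composite phi_r o phi_(sigma r) o ... o phi_(sigma^(m-1) r).
   orbit sigma r = [:: r; sigma r; ...; sigma^(m-1) r]  (fingraph). *)
Definition tilde (G : groupType) (n : nat) (phi : 'I_n -> G -> G)
    (sigma : {perm 'I_n}) (r : 'I_n) : G -> G :=
  foldr (fun i f => phi i \o f) id (orbit sigma r).

(* Main.v *)
Require Import Defs.
From Stdlib Require Import ClassicalDescription ClassicalEpsilon Classical.
From HB Require Import structures.
From mathcomp Require Import all_boot fingroup perm.

Set Implicit Arguments.
Unset Strict Implicit.
Unset Printing Implicit Defensive.

Definition has_Rn (T : Type) (E : T -> T -> Prop) (n : nat) : Prop :=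
  exists f : 'I_n -> T,
    (forall x : T, exists i, E x (f i)) /\
    (forall i j, E (f i) (f j) -> i = j).

Definition Rn (T : Type) (E : T -> T -> Prop) : option nat :=
  match excluded_middle_informative (exists n, has_Rn E n) with
  | left H => Some (proj1_sig (constructive_indefinite_description _ H))
  | right _ => None
  end.

Lemma RnumE (G : groupType) (psi : G -> G) : Rnum psi = Rn (tconj psi).
Proof. by []. Qed.

Definition equivP (T : Type) (E : T -> T -> Prop) :=
  (forall x, E x x) /\ (forall x y, E x y -> E y x) /\
  (forall x y z, E x y -> E y z -> E x z).

Lemma choiceT (A B : Type) (P : A -> B -> Prop) :
  (forall a, exists b, P a b) -> exists f : A -> B, forall a, P a (f a).
Proof.
move=> H; exists (fun a => proj1_sig (constructive_indefinite_description _ (H a))).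
by move=> a; exact: proj2_sig.
Qed.

Lemma has_Rn_le T (E : T -> T -> Prop) n m : equivP E ->
  has_Rn E n -> has_Rn E m -> (n <= m)%N.
Proof.
move=> [_ [Es Et]] [f [fc fi]] [g [gc gi]].
have [h Hh] := choiceT (fun i => gc (f i)).
have hinj : injective h.
  move=> i j hij; apply: fi; apply: Et (Hh i) _; rewrite hij; exact: Es.
by have := leq_card h hinj; rewrite !card_ord.
Qed.

Lemma Rn_some T (E : T -> T -> Prop) n : equivP E -> has_Rn E n -> Rn E = Some n.
Proof.
move=> eE hn; rewrite /Rn; case: excluded_middle_informative => [H|H]; last first.
  by case: H; exists n.
case: constructive_indefinite_description => m hm /=.
by congr Some; apply/eqP; rewrite eqn_leq !(has_Rn_le eE) .
Qed.

Lemma Rn_none T (E : T -> T -> Prop) : ~ (exists n, has_Rn E n) -> Rn E = None.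
Proof. by move=> H; rewrite /Rn; case: excluded_middle_informative. Qed.

Lemma has_RnF T (E : T -> T -> Prop) (I : finType) (f : I -> T) :
  (forall x, exists i, E x (f i)) -> (forall i j, E (f i) (f j) -> i = j) ->
  has_Rn E #|I|.
Proof.
move=> fc fi; exists (fun k => f (enum_val k)); split.
  by move=> x; have [i Hi] := fc x; exists (enum_rank i); rewrite enum_rankK.
by move=> i j /fi /enum_val_inj.
Qed.

Lemma cover_fin T (E : T -> T -> Prop) N (f : 'I_N -> T) : equivP E ->
  (forall x, exists i, E x (f i)) -> exists n, has_Rn E n.
Proof.
move=> eE; elim: N f => [|N IH] f fc.
  exists 0; exists f; split => //; by case.
case: (classic (exists i j, i <> j /\ E (f i) (f j))) => [[i [j [ij Eij]]]|H].
  apply: (IH (fun k => f (lift j k))) => x.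
  have [l Hl] := fc x.
  case: (unliftP j l) => [k eqk|eql]; first by exists k; rewrite -eqk.
  have : j != i by apply/eqP=> eji; apply: ij.
  case/unlift_some => k ik _; exists k; rewrite -ik.
  case: eE => [_ [Es Et]]; apply: Et Hl _; rewrite eql; exact: Es.
exists N.+1; exists f; split => // i j Eij.
by apply: NNPP => ij; apply: H; exists i, j.
Qed.

Definition prodE A B (E1 : A -> A -> Prop) (E2 : B -> B -> Prop) (x y : A * B) :=
  E1 x.1 y.1 /\ E2 x.2 y.2.

Lemma prodE_equiv A B (E1 : A -> A -> Prop) (E2 : B -> B -> Prop) :
  equivP E1 -> equivP E2 -> equivP (prodE E1 E2).
Proof.
move=> [r1 [s1 t1]] [r2 [s2 t2]]; split; first by move=> x; split.
split; first by move=> x y [] ? ?; split; auto.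
move=> x y z [] ? ? [] ? ?; split; eauto.
Qed.

Lemma Rn_prod A B (E1 : A -> A -> Prop) (E2 : B -> B -> Prop) (a0 : A) (b0 : B) :
  equivP E1 -> equivP E2 -> Rn (prodE E1 E2) = emul (Rn E1) (Rn E2).
Proof.
move=> e1 e2; have e12 := prodE_equiv e1 e2.
case: (classic (exists n, has_Rn E1 n)) => [[n1 h1]|h1]; last first.
  rewrite (Rn_none h1) Rn_none //= => -[N [f [fc _]]]; apply: h1.
  apply: (@cover_fin _ _ N (fun i => (f i).1)) => // x.
  by have [i [Hi _]] := fc (x, b0); exists i.
case: (classic (exists n, has_Rn E2 n)) => [[n2 h2]|h2]; last first.
  rewrite (Rn_none h2) Rn_none /=; first by case: (Rn E1).
  move=> -[N [f [fc _]]]; apply: h2.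
  apply: (@cover_fin _ _ N (fun i => (f i).2)) => // x.
  by have [i [_ Hi]] := fc (a0, x); exists i.
rewrite (Rn_some e1 h1) (Rn_some e2 h2) /=; apply: Rn_some => //.
case: h1 => f1 [c1 i1]; case: h2 => f2 [c2 i2].
have := @has_RnF _ (prodE E1 E2) _ (fun p : 'I_n1 * 'I_n2 => (f1 p.1, f2 p.2)).
rewrite card_prod !card_ord; apply.
  move=> [x y]; have [i Hi] := c1 x; have [j Hj] := c2 y; by exists (i, j).
by move=> [i j] [k l] [/= /i1 -> /i2 ->].
Qed.

Lemma Rn_transport A B (EA : A -> A -> Prop) (EB : B -> B -> Prop) (F : A -> B) :
  equivP EA -> equivP EB -> (forall b, exists a, EB b (F a)) ->
  (forall x y, EA x y <-> EB (F x) (F y)) -> Rn EA = Rn EB.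
Proof.
move=> eA eB Fs Fe.
have hAB n : has_Rn EA n -> has_Rn EB n.
  move=> [f [fc fi]]; exists (fun i => F (f i)); split.
    move=> b; have [a Ha] := Fs b; have [i Hi] := fc a; exists i.
    case: eB => [_ [_ Et]]; apply: Et Ha _; exact/Fe.
  by move=> i j /Fe /fi.
have hBA n : has_Rn EB n -> has_Rn EA n.
  move=> [f [fc fi]]; have [g Hg] := choiceT (fun i => Fs (f i)).
  exists g; split.
    move=> a; have [i Hi] := fc (F a); exists i; apply/Fe.
    case: eB => [_ [Es Et]]; apply: Et Hi _; exact: Hg.
  move=> i j /Fe Eij; apply: fi; move: eB => [_ [Es Et]].
  eapply Et; first exact: Hg i. eapply Et; first exact: Eij. exact: Es (Hg j).
case: (classic (exists n, has_Rn EA n)) => [[n h]|h].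
  by rewrite (Rn_some eA h) (Rn_some eB (hAB _ h)).
rewrite !Rn_none // => -[m hm]; apply: h; exists m; exact: hBA.
Qed.

Lemma Rn_unit : Rn (fun _ _ : unit => True) = Some 1%N.
Proof.
apply: Rn_some; first by split => //.
exists (fun _ => tt); split; first by move=> ?; exists ord0.
by move=> i j _; rewrite !ord1.
Qed.

Local Open Scope group_scope.

Lemma pmulE (G : groupType) n (x y : prodG n G) i : (x * y) i = x i * y i.
Proof. by rewrite /mulg /= ffunE. Qed.
Lemma pinvE (G : groupType) n (x : prodG n G) i : (x^-1) i = (x i)^-1.
Proof. by rewrite /invg /= ffunE. Qed.

Lemma morph1 (G : groupType) (f : G -> G) : {morph f : x y / x * y} -> f 1 = 1.
Proof.
move=> hf; have := hf 1 1; rewrite mulg1 => h.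
by apply: (@mulgI _ (f 1)); rewrite mulg1 -h.
Qed.

Lemma morphV (G : groupType) (f : G -> G) : {morph f : x y / x * y} ->
  forall x, f x^-1 = (f x)^-1.
Proof.
move=> hf x; apply: (@mulgI _ (f x)); by rewrite -hf !mulgV (morph1 hf).
Qed.

Lemma tconj_equiv (G : groupType) (f : G -> G) : {morph f : x y / x * y} ->
  equivP (tconj f).
Proof.
move=> hf; split; first by move=> x; exists 1; rewrite (morph1 hf) invg1 mul1g mulg1.
split.
  move=> x y [g ->]; exists g^-1; rewrite (morphV hf) invgK.
  by rewrite !mulgA mulVg mul1g -mulgA mulVg mulg1.
move=> x y z [g ->] [h ->]; exists (g * h).
by rewrite hf invMg !mulgA.
Qed.

Section Grp.
Variables (G : groupType) (n : nat) (phi : 'I_n -> G -> G) (sigma : {perm 'I_n}).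
Hypothesis hphi : forall i, {morph phi i : x y / x * y}.

Fixpoint Cc (x : 'I_n -> G) k i : G :=
  if k is k'.+1 then x i * phi i (Cc x k' (sigma i)) else 1.

Definition Phi k i : G -> G := foldr (fun j f => phi j \o f) id (traject sigma i k).

Lemma CcS x k i : Cc x k.+1 i = x i * phi i (Cc x k (sigma i)).
Proof. by []. Qed.
Lemma PhiS k i y : Phi k.+1 i y = phi i (Phi k (sigma i) y).
Proof. by []. Qed.
Lemma Phi0 i y : Phi 0 i y = y.
Proof. by []. Qed.
Lemma tildeE r : tilde phi sigma r = Phi (fingraph.order sigma r) r.
Proof. by []. Qed.

Lemma Phi_morph k i : {morph Phi k i : a b / a * b}.
Proof. elim: k i => [|k IH] i a b //; by rewrite !PhiS IH hphi. Qed.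

Lemma C_conj (x y h : 'I_n -> G) :
  (forall i, x i = h i * y i * (phi i (h (sigma i)))^-1) ->
  forall k i, Cc x k i = h i * Cc y k i * (Phi k i (h (iter k sigma i)))^-1.
Proof.
move=> Hx; elim=> [|k IH] i; first by rewrite /= mulg1 mulgV.
rewrite CcS Hx IH !hphi (morphV (hphi i)) CcS PhiS iterSr.
by rewrite -!mulgA mulKg.
Qed.

Lemma C_one x k i : (forall l, (l < k)%N -> x (iter l sigma i) = 1) -> Cc x k i = 1.
Proof.
elim: k i => [|k IH] i H //; rewrite CcS IH.
  by rewrite (morph1 (hphi i)) mulg1 (H 0%N).
by move=> l lk; rewrite -iterSr H.
Qed.

Definition Hh (x y : 'I_n -> G) k i g := Cc x k i * Phi k i g * (Cc y k i)^-1.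

Lemma H_step x y k i g :
  Hh x y k.+1 i g = x i * phi i (Hh x y k (sigma i) g) * (y i)^-1.
Proof.
rewrite /Hh !CcS PhiS invMg !hphi (morphV (hphi i)) !mulgA //.
Qed.

Lemma H0 x y i g : Hh x y 0 i g = g.
Proof. by rewrite /Hh /= mul1g invg1 mulg1. Qed.

Fixpoint PT (s : seq 'I_n) : Type := if s is _ :: s' then (G * PT s')%type else unit.
Fixpoint PE s : PT s -> PT s -> Prop :=
  match s return PT s -> PT s -> Prop with
  | [::] => fun _ _ => True
  | r :: s' => prodE (tconj (tilde phi sigma r)) (@PE s')
  end.
Fixpoint FF s (x : 'I_n -> G) : PT s :=
  match s return PT s with
  | [::] => tt
  | r :: s' => (Cc x (fingraph.order sigma r) r, FF s' x)
  end.
Fixpoint get s : PT s -> 'I_n -> G :=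
  match s return PT s -> 'I_n -> G with
  | [::] => fun _ _ => 1
  | r :: s' => fun (p : (G * PT s')%type) i => if i == r then p.1 else get p.2 i
  end.
Fixpoint pt0 s : PT s := match s return PT s with [::] => tt | _ :: s' => (1, pt0 s') end.

Lemma tilde_morph r : {morph tilde phi sigma r : a b / a * b}.
Proof. rewrite tildeE; exact: Phi_morph. Qed.

Lemma PE_equiv s : equivP (@PE s).
Proof.
elim: s => [|r s IH] /=; first by split => //.
exact: prodE_equiv (tconj_equiv (tilde_morph r)) IH.
Qed.

Lemma Rn_PE s : Rn (@PE s) = foldr emul (Some 1%N) [seq Rn (tconj (tilde phi sigma r)) | r <- s].
Proof.
elim: s => [|r s IH] /=; first exact: Rn_unit.
rewrite -IH; apply: Rn_prod 1 (pt0 s) _ _.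
  exact: tconj_equiv (tilde_morph r).
exact: PE_equiv.
Qed.

Lemma PE_FF s x y : PE (FF s x) (FF s y) <->
  (forall r, r \in s -> tconj (tilde phi sigma r) (Cc x (fingraph.order sigma r) r)
                                                (Cc y (fingraph.order sigma r) r)).
Proof.
elim: s => [|r s IH] /=; first by split => // _ r; rewrite in_nil.
split.
  move=> [h1 /IH h2] r'; rewrite in_cons => /orP[/eqP ->|]; [exact: h1|exact: h2].
move=> H; split; first by apply: H; rewrite mem_head.
by apply/IH => r' r's; apply: H; rewrite in_cons r's orbT.
Qed.

Lemma FF_get s (p : PT s) x : uniq s ->
  (forall r, r \in s -> Cc x (fingraph.order sigma r) r = get p r) -> FF s x = p.
Proof.
elim: s p => [|r s IH] /=; first by case.
move=> [a p] /andP[rs us] H /=; congr pair.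
  by rewrite H ?mem_head //= eqxx.
apply: IH => // r' r's; rewrite H /=; last by rewrite in_cons r's orbT.
by case: eqP => // e; move: rs; rewrite -e r's.
Qed.

End Grp.

Section Reps.
Variables (n : nat) (sigma : {perm 'I_n}) (reps : seq 'I_n) (d : 'I_n).
Hypothesis hreps : forall i : 'I_n, count (fun r => i \in orbit sigma r) reps = 1%N.

Lemma orbit_self r : r \in orbit sigma r.
Proof. by rewrite -fconnect_orbit connect0. Qed.

Lemma rep_uniq_of i r r' : r \in reps -> r' \in reps ->
  i \in orbit sigma r -> i \in orbit sigma r' -> r = r'.
Proof.
move=> rr rr' ir ir'.
have : r \in filter (fun r => i \in orbit sigma r) reps by rewrite mem_filter ir rr.
have : r' \in filter (fun r => i \in orbit sigma r) reps by rewrite mem_filter ir' rr'.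
have := size_filter (fun r => i \in orbit sigma r) reps; rewrite hreps.
by case: filter => [|a [|b t]] //= _; rewrite !inE => /eqP -> /eqP ->.
Qed.

Lemma reps_uniq : uniq reps.
Proof.
apply: count_mem_uniq => x.
have Hs : subpred (pred1 x) (fun r => x \in orbit sigma r).
  by move=> y /eqP ->; exact: orbit_self.
have := sub_count Hs reps; rewrite hreps.
case: (boolP (x \in reps)) => xin; last by rewrite (count_memPn xin).
have : (0 < count_mem x reps)%N by rewrite -has_count has_pred1.
by case: (count_mem x reps) => [|[|]].
Qed.

Lemma iter_notin r l : r \in reps -> (0 < l < fingraph.order sigma r)%N ->
  iter l sigma r \notin reps.
Proof.
move=> rr /andP[l0 lo]; apply/negP => lin.
have e : r = iter l sigma r.
  apply: (rep_uniq_of (i := iter l sigma r)) rr lin _ (orbit_self _).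
  by rewrite -fconnect_orbit fconnect_iter.
have := findex_iter lo; rewrite -e findex0 => l0'.
by rewrite -l0' in l0.
Qed.

Definition rep i := nth d reps (find (fun r => i \in orbit sigma r) reps).

Lemma has_rep i : has (fun r => i \in orbit sigma r) reps.
Proof. by rewrite has_count hreps. Qed.

Lemma rep_in i : rep i \in reps.
Proof. by rewrite /rep mem_nth // -has_find has_rep. Qed.

Lemma rep_orbit i : i \in orbit sigma (rep i).
Proof. exact: (nth_find d (has_rep i)). Qed.

Lemma rep_sigma i : rep (sigma i) = rep i.
Proof.
rewrite /rep; congr nth; apply: eq_find => r /=.
by rewrite -!fconnect_orbit -(same_fconnect1_r (@perm_inj _ sigma)).
Qed.

End Reps.

Unset Implicit Arguments.
Local Open Scope group_scope.

Theorem mainTheorem5 (G : groupType) (n : nat) (hn : (0 < n)%N)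
    (phi : 'I_n -> G -> G)
    (hphi : forall i, {morph phi i : x y / x * y})
    (sigma : {perm 'I_n})
    (reps : seq 'I_n)
    (hreps : forall i : 'I_n, count (fun r => i \in orbit sigma r) reps = 1%N) :
  Rnum (phiN phi sigma) = foldr emul (Some 1%N) [seq Rnum (tilde phi sigma r) | r <- reps].
Proof.
pose dflt : 'I_n := Ordinal hn.
rewrite RnumE.
transitivity (Rn (@PE G n phi sigma reps)); last exact: Rn_PE.
have phiN_morph : {morph phiN phi sigma : a b / a * b}.
  by move=> a b; apply/ffunP => i; rewrite /phiN !ffunE hphi.
eapply (@Rn_transport _ _ _ _ (fun x : prodG n G => FF phi sigma reps x)).
- exact: tconj_equiv.
- exact: PE_equiv.
- move=> p.
  pose x : prodG n G := [ffun i => if i \in reps then get p i else 1].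
  exists x; suff -> : FF phi sigma reps x = p.
    by have [refl _] := PE_equiv sigma hphi reps; exact: refl.
    apply: FF_get; first exact: reps_uniq hreps.
    move=> r rr.
    have := fingraph.order_gt0 sigma r; case E: (fingraph.order sigma r) => [|m] // _.
    rewrite CcS (C_one hphi).
      by rewrite (morph1 (hphi r)) mulg1 ffunE rr.
    move=> l lm; rewrite ffunE -iterSr (negbTE (iter_notin hreps rr _)) //.
    by rewrite E.
- move=> x y; rewrite PE_FF; split.
  + move=> [h Eh] r rr; exists (h r).
    have Hx : forall i, x i = h i * y i * (phi i (h (sigma i)))^-1.
      by move=> i; rewrite Eh !pmulE pinvE /phiN ffunE.
    rewrite (C_conj hphi Hx) iter_order ?tildeE //; exact: perm_inj.
  + move=> H.
    have [g Hg] : exists g : 'I_n -> G, forall r, r \in reps ->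
        Cc phi sigma x (fingraph.order sigma r) r =
        g r * Cc phi sigma y (fingraph.order sigma r) r * (tilde phi sigma r (g r))^-1.
      apply: (choiceT (P := fun r g => r \in reps ->
        Cc phi sigma x (fingraph.order sigma r) r =
        g * Cc phi sigma y (fingraph.order sigma r) r * (tilde phi sigma r g)^-1)).
      move=> r; case: (boolP (r \in reps)) => rr; last by exists 1.
      by have [g e] := H r rr; exists g.
    exists [ffun i => Hh phi sigma x y (fingraph.order sigma (rep sigma reps dflt i)
              - findex sigma (rep sigma reps dflt i) i) i (g (rep sigma reps dflt i))].
    apply/ffunP => i; rewrite !pmulE pinvE /phiN !ffunE rep_sigma //.
    set r := rep sigma reps dflt i.
    have ri : fconnect sigma r i by rewrite fconnect_orbit rep_orbit.
    have jm := findex_max ri.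
    have rin : r \in reps by exact: rep_in.
    set m := fingraph.order sigma r.
    set j := findex sigma r i.
    rewrite -/m -/j in jm *.
    rewrite -(subnSK jm) H_step //.
    suff -> : Hh phi sigma x y (m - findex sigma r (sigma i)) (sigma i) (g r) =
              Hh phi sigma x y (m - j.+1) (sigma i) (g r).
      by rewrite mulgKV mulgK.
    have si : sigma i = iter j.+1 sigma r by rewrite iterS iter_findex.
    rewrite leq_eqVlt in jm; case/orP: jm => [/eqP jm|jm].
      have sr : sigma i = r by rewrite si jm iter_order //; exact: perm_inj.
      rewrite sr findex0 subn0 jm subnn H0 /Hh (Hg r rin) tildeE -/m.
      by rewrite mulgKV mulgK.
    by rewrite si findex_iter.
Qed.
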